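(* Let $\mathbf{P}=(p_{i,j})_{i,j=0}^{d}$ be the transition matrix of an ergodic discrete-time Markov chain on $\{0,\dots,d\}$ with stationary distribution $\boldsymbol{\pi}$, let $Y_1,\dots,Y_{W+1}$ be the chain started with $Y_1\sim\boldsymbol{\pi}$, and let $N_{i,j}=\sum_{t=1}^{W}\mathbf{1}_{\{Y_t=i,Y_{t+1}=j\}}$. For $n\ge 0$ let $\epsilon_{j,i}^{(n)}=[\mathbf{P}^{n}]_{j,i}-\pi_i$. Then for every state $i$ and states $j\neq j'$, $$\mathrm{Cov}[N_{i,j},N_{i,j'}]=\pi_i p_{i,j}p_{i,j'}\left(-W\pi_i+\sum_{t'=1}^{W-1}(W-t')\left(\epsilon_{j,i}^{(t'-1)}+\epsilon_{j',i}^{(t'-1)}\right)\right).$$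
   Context: $\mathbf{P}^{0}$ is the identity matrix; $\mathbf{1}_{\{\cdot\}}$ is the indicator function. *)

(* Defs.v *)
From HB Require Import structures.
From mathcomp Require Import all_boot all_order all_algebra.
Set Implicit Arguments. Unset Strict Implicit. Unset Printing Implicit Defensive.
Import Order.TTheory GRing.Theory Num.Theory.
Local Open Scope ring_scope.

Section MC.
Variable (R : realFieldType) (d : nat).
Notation S := 'I_d.+1.

Definition stochastic (P : 'M[R]_d.+1) : Prop :=
  (forall i j : S, 0 <= P i j) /\ (forall i : S, \sum_(j < d.+1) P i j = 1).

Definition irreducible (P : 'M[R]_d.+1) : Prop :=
  forall i j : S, exists n : nat, 0 < (P ^+ n) i j.

(* aperiodic: for every state i, gcd{ n >= 1 : P^n_{ii} > 0 } = 1, i.e.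
   no k >= 2 divides every such n *)
Definition aperiodic (P : 'M[R]_d.+1) : Prop :=
  forall i : S, forall k : nat, (1 < k)%N ->
    exists n : nat, (0 < n)%N /\ 0 < (P ^+ n) i i /\ ~~ (k %| n)%N.

Definition ergodic (P : 'M[R]_d.+1) : Prop :=
  stochastic P /\ irreducible P /\ aperiodic P.

Definition stationary (P : 'M[R]_d.+1) (pi : 'rV[R]_d.+1) : Prop :=
  (forall i : S, 0 <= pi 0 i) /\ \sum_(i < d.+1) pi 0 i = 1 /\ pi *m P = pi.

Variable W : nat.
(* a trajectory (Y_1, ..., Y_{W+1}); y t stands for Y_{t+1} *)
Definition path := {ffun 'I_W.+1 -> S}.

Definition path_prob (P : 'M[R]_d.+1) (pi : 'rV[R]_d.+1) (y : path) : R :=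
  pi 0 (y ord0) * \prod_(t < W) P (y (inord t)) (y (inord t.+1)).

Definition expect (P : 'M[R]_d.+1) (pi : 'rV[R]_d.+1) (X : path -> R) : R :=
  \sum_(y : path) path_prob P pi y * X y.

Definition cov (P : 'M[R]_d.+1) (pi : 'rV[R]_d.+1) (X Y : path -> R) : R :=
  expect P pi (fun y => X y * Y y) - expect P pi X * expect P pi Y.

Definition Ncount (i j : S) (y : path) : R :=
  \sum_(t < W) ((y (inord t) == i) && (y (inord t.+1) == j))%:R.

End MC.

Definition eps (R : realFieldType) (d : nat) (P : 'M[R]_d.+1) (pi : 'rV[R]_d.+1)
  (n : nat) (j i : 'I_d.+1) : R := (P ^+ n) j i - pi 0 i.

(* Main.v *)
Require Import Defs.
From HB Require Import structures.
From mathcomp Require Import all_boot all_order all_algebra.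
Set Implicit Arguments. Unset Strict Implicit. Unset Printing Implicit Defensive.
Import Order.TTheory GRing.Theory Num.Theory.
Local Open Scope ring_scope.
From mathcomp Require Import ring.

Section Aux.
Variable (R : realFieldType) (d : nat).
Notation S := 'I_d.+1.

Definition fcons n (s : S) (z : {ffun 'I_n -> S}) : {ffun 'I_n.+1 -> S} :=
  [ffun k => if unlift ord0 k is Some k' then z k' else s].

Lemma fcons0 n s z : @fcons n s z ord0 = s.
Proof. by rewrite ffunE unlift_none. Qed.

Lemma fconsS n s z k : @fcons n s z (lift ord0 k) = z k.
Proof. by rewrite ffunE liftK. Qed.

Lemma inord0E n : inord 0 = ord0 :> 'I_n.+1.
Proof. by apply: ord_inj; rewrite inordK. Qed.

Lemma fcons_inordS n s (z : {ffun 'I_n.+1 -> S}) k : (k <= n)%N ->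
  fcons s z (inord k.+1) = z (inord k).
Proof.
move=> hk; have -> : inord k.+1 = lift ord0 (inord k : 'I_n.+1).
  by apply: ord_inj; rewrite lift0 !inordK.
by rewrite fconsS.
Qed.

Lemma sum_ffunS n (F : {ffun 'I_n.+1 -> S} -> R) :
  \sum_y F y = \sum_(s : S) \sum_(z : {ffun 'I_n -> S}) F (fcons s z).
Proof.
rewrite pair_big /=.
rewrite (reindex (fun p : S * {ffun 'I_n -> S} => fcons p.1 p.2)) //=.
exists (fun y => (y ord0, [ffun k => y (lift ord0 k)])) => [[s z] _ | y _] /=.
  by rewrite fcons0; congr pair; apply/ffunP => k; rewrite ffunE fconsS.
apply/ffunP => k; rewrite ffunE; case: unliftP => [k' ->|<-]; by rewrite ?ffunE.
Qed.

Lemma path_sum n (a : 'rV[R]_d.+1) (b : 'cV[R]_d.+1) (Q : nat -> 'M[R]_d.+1) :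
  \sum_(y : {ffun 'I_n.+1 -> S}) a 0 (y ord0) *
     (\prod_(t < n) Q t (y (inord t)) (y (inord t.+1))) * b (y (inord n)) 0
  = (a *m (\prod_(t < n) Q t) *m b) 0 0.
Proof.
elim: n a Q => [|n IH] a Q.
  rewrite sum_ffunS big_ord0 mulmx1 mxE; apply: eq_bigr => s _.
  rewrite (eq_bigr (fun _ => a 0 s * b s 0)) => [|z _]; last first.
    by rewrite big_ord0 mulr1 fcons0 inord0E fcons0.
  by rewrite sumr_const card_ffun !card_ord expn0 mulr1n.
transitivity (\sum_(z : {ffun 'I_n.+1 -> S}) (a *m Q 0%N) 0 (z ord0) *
   (\prod_(t < n) Q t.+1 (z (inord t)) (z (inord t.+1))) * b (z (inord n)) 0).
  rewrite sum_ffunS exchange_big /=; apply: eq_bigr => z _.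
  rewrite !mxE big_distrl big_distrl /=; apply: eq_bigr => s _ /=.
  rewrite big_ord_recl /= fcons0 inord0E fcons0 fcons_inordS // inord0E.
  rewrite fcons_inordS // -!mulrA; congr (_ * (_ * (_ * _))).
  apply: eq_bigr => t _; rewrite /bump leq0n add1n !fcons_inordS //.
  exact: ltnW.
move: (IH (a *m Q 0%N) (fun t => Q t.+1)) => /= ->.
rewrite big_ord_recl -mulmxE !mulmxA.
apply: (congr1 (fun M => (a *m Q 0%N *m M *m b) 0 0)).
by apply: eq_bigr => t _.
Qed.

End Aux.
Section Comb.
Variable R : realFieldType.

Lemma comb1 W (f : nat -> R) :
  \sum_(t < W) \sum_(s < W) (if (t < s)%N then f (s - t.+1)%N else 0) =
  \sum_(1 <= k < W) (W - k)%:R * f k.-1.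
Proof.
elim: W => [|W IH]; first by rewrite big_ord0 big_geq.
rewrite big_ord_recr /= [X in _ + X = _]big1 ?addr0 => [|s _]; last first.
  by rewrite ltnNge -ltnS ltn_ord.
under eq_bigr => t _ do rewrite big_ord_recr /=.
rewrite big_split /= IH.
rewrite (eq_bigr (fun t : 'I_W => f (W - t.+1)%N)) => [|t _]; last by rewrite ltn_ord.
have -> : \sum_(1 <= k < W.+1) (W.+1 - k)%:R * f k.-1 =
    \sum_(1 <= k < W.+1) ((W - k)%:R * f k.-1 + f k.-1).
  apply: eq_big_nat => k /andP[h1 h2].
  by rewrite subSn ?(ltnS k W) // -addn1 natrD mulrDl mul1r.
rewrite big_split /=; congr (_ + _).
  case: (W) => [|W']; first by rewrite !big_geq.
  by rewrite [RHS]big_nat_recr //= subnn mul0r addr0.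
rewrite [RHS]big_add1 /= [RHS]big_nat_rev add0n big_mkord.
by apply: eq_bigr => t _.
Qed.


Lemma comb W (f g : nat -> R) :
  \sum_(t < W) \sum_(s < W) (if (t < s)%N then f (s - t.+1)%N
        else if (s < t)%N then g (t - s.+1)%N else 0) =
  \sum_(1 <= k < W) (W - k)%:R * (f k.-1 + g k.-1).
Proof.
transitivity (\sum_(t < W) (\sum_(s < W) (if (t < s)%N then f (s - t.+1)%N else 0)
   + \sum_(s < W) (if (s < t)%N then g (t - s.+1)%N else 0))).
  apply: eq_bigr => t _; rewrite -big_split /=; apply: eq_bigr => s _.
  by case: ltngtP => h; rewrite ?addr0 ?add0r.
rewrite big_split /= comb1 exchange_big /= comb1 -big_split /=.
by apply: eq_big_nat => k _; rewrite mulrDr.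
Qed.

Lemma cnt W (c : R) :
  \sum_(t < W) \sum_(s < W) (if (t < s)%N then c
        else if (s < t)%N then c else 0) = W%:R * (W%:R * c - c).
Proof.
transitivity (\sum_(t < W) \sum_(s < W) (c - (s == t)%:R * c)).
  apply: eq_bigr => t _; apply: eq_bigr => s _.
  case: ltngtP => h.
  - have/negbTE-> : s != t by apply: contraTneq h => ->; rewrite ltnn.
    by rewrite mul0r subr0.
  - have/negbTE-> : s != t by apply: contraTneq h => ->; rewrite ltnn.
    by rewrite mul0r subr0.
  - by rewrite (ord_inj h) eqxx mul1r subrr.
rewrite (eq_bigr (fun _ => W%:R * c - c)) => [|t _].
  by rewrite sumr_const card_ord [RHS]mulr_natl.
rewrite (sumrB _ _ (fun=> c)) sumr_const card_ord; congr (_ - _).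
  by rewrite mulr_natl.
rewrite (bigD1 t) //= eqxx mul1r big1 ?addr0 // => s /negbTE ->.
by rewrite mul0r.
Qed.

End Comb.
Section Chain.
Variable (R : realFieldType) (d W : nat) (P : 'M[R]_d.+1) (pi : 'rV[R]_d.+1).
Hypothesis hrow : forall a : 'I_d.+1, \sum_(b < d.+1) P a b = 1.
Hypothesis hstat : pi *m P = pi.
Notation S := 'I_d.+1.

Definition Qm (f : S -> S -> R) : 'M[R]_d.+1 := \matrix_(a, b) (P a b * f a b).
Definition c1 : 'cV[R]_d.+1 := const_mx 1.

Lemma expect_ext (X Y : Defs.path d W -> R) : (forall y, X y = Y y) ->
  expect P pi X = expect P pi Y.
Proof. by move=> h; apply: eq_bigr => y _; rewrite h. Qed.

Lemma expect_sum I (r : seq I) (p : pred I) (F : I -> Defs.path d W -> R) :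
  expect P pi (fun y => \sum_(k <- r | p k) F k y) =
  \sum_(k <- r | p k) expect P pi (F k).
Proof.
rewrite /expect exchange_big /=; apply: eq_bigr => y _; by rewrite mulr_sumr.
Qed.

Lemma expect_prod (f : nat -> S -> S -> R) :
  expect (W:=W) P pi (fun y => \prod_(t < W) f t (y (inord t)) (y (inord t.+1))) =
  (pi *m (\prod_(t < W) Qm (f t)) *m c1) 0 0.
Proof.
rewrite /expect -(@path_sum R d W pi c1 (fun t => Qm (f t))); apply: eq_bigr => y _.
rewrite /path_prob mxE mulr1 -mulrA -big_split /=; congr (_ * _).
by apply: eq_bigr => t _; rewrite mxE.
Qed.

Lemma piPn n : pi *m P ^+ n = pi.
Proof.
elim: n => [|n IH]; first by rewrite expr0 mulmx1.
by rewrite exprSr -mulmxE mulmxA IH hstat.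
Qed.

Lemma Pc1 : P *m c1 = c1.
Proof. by apply/matrixP => a b; rewrite !mxE -[RHS](hrow a); apply: eq_bigr => k _; rewrite mxE mulr1. Qed.

Lemma Pnc1 n : P ^+ n *m c1 = c1.
Proof.
elim: n => [|n IH]; first by rewrite expr0 mul1mx.
by rewrite exprS -mulmxE -mulmxA IH Pc1.
Qed.

Lemma prod_const m n (M : nat -> 'M[R]_d.+1) :
  (forall u, (m <= u < n)%N -> M u = P) -> \prod_(m <= u < n) M u = P ^+ (n - m).
Proof. by move=> h; rewrite (eq_big_nat _ _ h) prodr_const_nat. Qed.

Lemma prod_split3 m t n (M : nat -> 'M[R]_d.+1) : (m <= t < n)%N ->
  \prod_(m <= u < n) M u = \prod_(m <= u < t) M u * M t * \prod_(t.+1 <= u < n) M u.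
Proof.
case/andP=> h1 h2.
by rewrite (big_cat_nat h1 (ltnW h2)) /= (big_cat_nat (leqnSn t) h2) big_nat1 mulrA.
Qed.


Lemma sum_pick (F : S -> R) k : (forall b, b != k -> F b = 0) -> \sum_b F b = F k.
Proof.
by move=> h; rewrite (bigD1 k) //= big1 ?addr0 // => b hb; apply: h.
Qed.

Variable i : S.
Definition ind (k : S) (a b : S) : R := ((a == i) && (b == k))%:R.
Definition g (t : nat) k (u : nat) a b : R := if u == t then ind k a b else 1.
Definition E k := Qm (ind k).

Lemma piE k : pi *m E k = \row_b (pi 0 i * P i k * (b == k)%:R).
Proof.
apply/matrixP => x b; rewrite (ord1 x) !mxE (sum_pick (k:=i)) => [|a ha].
  rewrite /E /Qm mxE /ind eqxx /=.
  by case: eqVneq => [->|_]; rewrite ?mulr1 ?mulr0 ?mulrA.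
by rewrite /E /Qm mxE /ind (negbTE ha) /= mulr0 mulr0.
Qed.

Lemma Ec1 k : E k *m c1 = \col_a ((a == i)%:R * P i k).
Proof.
apply/matrixP => a x; rewrite (ord1 x) !mxE (sum_pick (k:=k)) => [|b hb].
  rewrite /E /Qm !mxE /ind eqxx andbT mulr1; case: eqVneq => [->|_].
    by rewrite mulr1 mul1r.
  by rewrite mulr0 mul0r.
by rewrite /E /Qm !mxE /ind (negbTE hb) andbF mulr0 mul0r.
Qed.

Lemma value1 x y k : (pi *m (P ^+ x * E k * P ^+ y) *m c1) 0 0 = pi 0 i * P i k.
Proof.
rewrite -!mulmxE !mulmxA piPn -mulmxA Pnc1 -mulmxA Ec1 mxE (sum_pick (k:=i)) => [|a ha].
  by rewrite mxE eqxx mul1r.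
by rewrite mxE (negbTE ha) mul0r mulr0.
Qed.

Lemma value2 x y k1 k2 M : (pi *m (P ^+ x * E k1 * M * E k2 * P ^+ y) *m c1) 0 0 =
   pi 0 i * P i k1 * M k1 i * P i k2.
Proof.
rewrite -!mulmxE !mulmxA piPn -mulmxA Pnc1 -mulmxA Ec1 piE mxE (sum_pick (k:=i)) => [|a ha].
  rewrite !mxE eqxx mul1r (sum_pick (k:=k1)) => [|b hb].
    by rewrite mxE eqxx mulr1.
  by rewrite mxE (negbTE hb) mulr0 mul0r.
by rewrite [X in _ * X]mxE (negbTE ha) mul0r mulr0.
Qed.


Lemma Qm_P t k u : u != t -> Qm (g t k u) = P.
Proof. by move=> h; apply/matrixP => a b; rewrite !mxE /g (negbTE h) mulr1. Qed.

Lemma Qm_E t k : Qm (g t k t) = E k.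
Proof. by apply/matrixP => a b; rewrite !mxE /g eqxx. Qed.

Lemma one_point t k : (t < W)%N ->
  \prod_(u < W) Qm (g t k u) = P ^+ t * E k * P ^+ (W - t.+1).
Proof.
move=> ht; rewrite -(big_mkord xpredT (fun u => Qm (g t k u))).
rewrite (prod_split3 (t:=t)) ?ht // Qm_E.
rewrite !prod_const ?subn0 // => u /andP[h1 h2]; apply: Qm_P;
  by rewrite neq_ltn ?h1 ?h2 ?orbT.
Qed.

Definition g2 t s k1 k2 u a b := g t k1 u a b * g s k2 u a b.

Lemma two_point t s k1 k2 : (t < s)%N -> (s < W)%N ->
  \prod_(u < W) Qm (g2 t s k1 k2 u) =
  P ^+ t * E k1 * P ^+ (s - t.+1) * E k2 * P ^+ (W - s.+1).
Proof.
move=> hts hs; rewrite -(big_mkord xpredT (fun u => Qm (g2 t s k1 k2 u))).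
rewrite (prod_split3 (t:=t)) ?(ltn_trans hts hs) //.
rewrite (@prod_split3 t.+1 s) ?hts ?hs //.
have hP u : u != t -> u != s -> Qm (g2 t s k1 k2 u) = P.
  move=> h1 h2; apply/matrixP => a b.
  by rewrite !mxE /g2 /g (negbTE h1) (negbTE h2) !mulr1.
have -> : Qm (g2 t s k1 k2 t) = E k1.
  apply/matrixP => a b.
  by rewrite !mxE /g2 /g eqxx (ltn_eqF hts) mulr1.
have -> : Qm (g2 t s k1 k2 s) = E k2.
  apply/matrixP => a b.
  by rewrite !mxE /g2 /g eqxx (gtn_eqF hts) mul1r.
rewrite !prod_const ?subn0 ?mulrA // => u /andP[h1 h2]; apply: hP;
  rewrite neq_ltn ?h1 ?h2 ?orbT //;
  try (by rewrite (ltn_trans h2 hts)); try (by rewrite (leq_trans hts h1) orbT).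
all: by rewrite (ltn_trans hts h1) orbT.
Qed.

Definition A (t : nat) (k : S) (y : Defs.path d W) : R :=
  ((y (inord t) == i) && (y (inord t.+1) == k))%:R.

Lemma ind_prod t k y : (t < W)%N ->
  A t k y = \prod_(u < W) g t k u (y (inord u)) (y (inord u.+1)).
Proof.
move=> ht; rewrite (bigD1 (Ordinal ht)) //= /g eqxx big1 ?mulr1 // => u hu.
rewrite ifN //; apply: contra hu => /eqP h; apply/eqP/ord_inj.
Qed.


Lemma EA t k : (t < W)%N -> expect P pi (A t k) = pi 0 i * P i k.
Proof.
move=> ht.
rewrite (expect_ext (Y := fun y => \prod_(u < W) g t k u (y (inord u)) (y (inord u.+1))))
  => [|y]; last exact: ind_prod.
by rewrite (expect_prod (g t k)) one_point // value1.
Qed.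

Variables j j' : S.
Hypothesis hjj : j != j'.

Lemma EAB t s : (t < W)%N -> (s < W)%N ->
  expect P pi (fun y => A t j y * A s j' y) =
  pi 0 i * P i j * P i j' * (if (t < s)%N then (P ^+ (s - t.+1)) j i
      else if (s < t)%N then (P ^+ (t - s.+1)) j' i else 0).
Proof.
move=> ht hs; case: ltngtP => h.
- rewrite (expect_ext (Y := fun y => \prod_(u < W) g2 t s j j' u (y (inord u)) (y (inord u.+1))))
    => [|y]; last by rewrite [A t _ _]ind_prod // [A s _ _]ind_prod // -big_split.
  rewrite (expect_prod (g2 t s j j')) two_point // value2; ring.
- rewrite (expect_ext (Y := fun y => \prod_(u < W) g2 s t j' j u (y (inord u)) (y (inord u.+1))))
    => [|y]; last by rewrite mulrC [A t _ _]ind_prod // [A s _ _]ind_prod // -big_split.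
  rewrite (expect_prod (g2 s t j' j)) two_point // value2; ring.
- subst s; rewrite (expect_ext (Y := fun=> 0)) => [|y]; last first.
    rewrite /A; case: (_ == i) => /=; last by rewrite mul0r.
    case: eqVneq => [->|_]; last by rewrite mul0r.
    by rewrite (negbTE hjj) mulr0.
  by rewrite mulr0 /expect big1 // => y _; rewrite mulr0.
Qed.

Lemma cov_formula :
  cov (W:=W) P pi (@Ncount R d W i j) (@Ncount R d W i j') =
  pi 0 i * P i j * P i j' *
    (- (W%:R * pi 0 i) +
     \sum_(1 <= t' < W) (W - t')%:R * (eps P pi t'.-1 j i + eps P pi t'.-1 j' i)).
Proof.
have EN k : expect P pi (@Ncount R d W i k) = W%:R * (pi 0 i * P i k).
  transitivity (expect P pi (fun y => \sum_(t < W) A t k y)); first by [].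
  rewrite expect_sum (eq_bigr (fun _ => pi 0 i * P i k)) => [|t _]; last first.
    exact: EA.
  by rewrite sumr_const card_ord mulr_natl.
rewrite /cov !EN.
rewrite (expect_ext (Y := fun y => \sum_(t < W) \sum_(s < W) A t j y * A s j' y))
  => [|y]; last by rewrite /Ncount big_distrlr.
rewrite expect_sum.
under eq_bigr do rewrite expect_sum.
rewrite (eq_bigr (fun t : 'I_W => pi 0 i * P i j * P i j' * \sum_(s < W)
   (if (t < s)%N then (P ^+ (s - t.+1)) j i
      else if (s < t)%N then (P ^+ (t - s.+1)) j' i else 0))) => [|t _]; last first.
  by rewrite mulr_sumr; apply: eq_bigr => s _; apply: EAB.
rewrite -mulr_sumr.
have := comb W (fun n => (P ^+ n) j i) (fun n => (P ^+ n) j' i) => /= ->.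
have := comb W (fun _ => pi 0 i) (fun _ => pi 0 i) => /=; rewrite cnt => hc.
have -> : \sum_(1 <= t' < W) (W - t')%:R * (eps P pi t'.-1 j i + eps P pi t'.-1 j' i) =
  \sum_(1 <= k < W) (W - k)%:R * ((P ^+ k.-1) j i + (P ^+ k.-1) j' i)
  - \sum_(1 <= k < W) (W - k)%:R * (pi 0 i + pi 0 i).
  rewrite -sumrB; apply: eq_bigr => k _; rewrite /eps; ring.
rewrite -hc; ring.
Qed.

End Chain.

Theorem mainTheorem2 (R : realFieldType) (d W : nat)
  (P : 'M[R]_d.+1) (pi : 'rV[R]_d.+1)
  (hP : ergodic P) (hpi : stationary P pi)
  (i j j' : 'I_d.+1) (hjj' : j != j') :
  cov (W:=W) P pi (@Ncount R d W i j) (@Ncount R d W i j') =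
  pi 0 i * P i j * P i j' *
    (- (W%:R * pi 0 i) +
     \sum_(1 <= t' < W) (W - t')%:R * (eps P pi t'.-1 j i + eps P pi t'.-1 j' i)).
Proof.
case: hP => [[_ hrow] _]; case: hpi => [_ [_ hstat]].
by apply: cov_formula.
Qed.
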